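(* Let $G=(V,E)$ be an arbitrary graph with capacities $b_v\ge0$, demands $d_{u,e},d_{v,e}\ge0$ and profits $p_e\ge0$ for each edge $e=uv$, such that the instance has a consistent ordering of edges and $d_{v,e}\le b_v$ for all $v$ and $e\in\delta(v)$. Let $M'\subseteq E$ satisfy $\sum_{e\in\delta_{M'}(v)\setminus L(v)}d_{v,e}\le b_v$ for every $v\in V$, where $L(v)$ is a set of the two edges of $\delta_{M'}(v)$ with highest $d_{v,e}$ (or $L(v)=\delta_{M'}(v)$ if $|\delta_{M'}(v)|\le1$). Then one can find $M\subseteq M'$ with $\sum_{e\in\delta_M(v)}d_{v,e}\le b_v$ for all $v\in V$ and $p(M)\ge\frac{p(M')}{5}$.
   Context: A consistent ordering of edges is a linear order of $E$ whose restriction to each $\delta(v)$ lists the edges in nondecreasing order of $d_{v,e}$. $\delta(v)$ is the set of edges incident to $v$, $\delta_{M'}(v)=\delta(v)\cap M'$, $p(M)=\sum_{e\in M}p_e$. *)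

(* Defs.v *)
From HB Require Import structures.
From mathcomp Require Import all_boot all_order all_algebra.
Set Implicit Arguments. Unset Strict Implicit. Unset Printing Implicit Defensive.
Import Order.TTheory GRing.Theory Num.Theory.
Local Open Scope ring_scope.

(* A graph with vertex set V and edge set E (parallel edges allowed, no
   loops): every edge e has two distinct endpoints [src e] and [dst e]. *)

Definition delta (V E : finType) (src dst : E -> V) (v : V) : {set E} :=
  [set e | (src e == v) || (dst e == v)].

Definition deltaM (V E : finType) (src dst : E -> V) (M : {set E}) (v : V)
  : {set E} := delta src dst v :&: M.

Definition consistent_ordering (R : realDomainType) (V E : finType)
  (src dst : E -> V) (d : V -> E -> R) (rk : E -> nat) : Prop :=
  injective rk /\
  forall v e f, e \in delta src dst v -> f \in delta src dst v ->
    (rk e < rk f)%N -> d v e <= d v f.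

(* L is a valid choice of L(v) for the edge set S = delta_{M'}(v):
   if |S| <= 1 then L = S, otherwise L consists of two edges of S with
   highest demand d v _. *)
Definition top2 (R : realDomainType) (E : finType) (w : E -> R)
  (S L : {set E}) : Prop :=
  L \subset S /\ #|L| = minn 2 #|S| /\
  forall e f, e \in L -> f \in S :\: L -> w f <= w e.

Definition profit (R : realDomainType) (E : finType) (p : E -> R)
  (M : {set E}) : R := \sum_(e in M) p e.

(* Main.v *)
Require Import Defs.
From HB Require Import structures.
From mathcomp Require Import all_boot all_order all_algebra.
From mathcomp Require Import zify lra.
Set Implicit Arguments. Unset Strict Implicit. Unset Printing Implicit Defensive.
Import Order.TTheory GRing.Theory Num.Theory.
Local Open Scope ring_scope.

Lemma sum_le_sets (R : realDomainType) (E : finType) (w : E -> R) (A C : {set E}) :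
  (#|A| <= #|C|)%N -> (forall a c, a \in A -> c \in C -> w a <= w c) ->
  (forall c, c \in C -> 0 <= w c) ->
  \sum_(e in A) w e <= \sum_(e in C) w e.
Proof.
elim: {A}#|A| {-2}A (erefl #|A|) C => [|n IH] A eA C hc hac h0.
  move/eqP: eA; rewrite cards_eq0 => /eqP ->; rewrite big_set0.
  by apply: sumr_ge0.
have [a Ha] : exists a, a \in A by apply/set0Pn; rewrite -card_gt0 eA.
have [c Hc] : exists c, c \in C by apply/set0Pn; rewrite -card_gt0 (leq_trans _ hc) // eA.
rewrite (big_setD1 _ Ha) (big_setD1 _ Hc) /=.
apply: lerD; first exact: hac.
apply: IH.
- by move: eA; rewrite (cardsD1 a) Ha add1n => [[]].
- by move: hc; rewrite (cardsD1 a A) (cardsD1 c C) Ha Hc.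
- by move=> x y /setD1P[_ xA] /setD1P[_ yC]; apply: hac.
- by move=> y /setD1P[_ yC]; apply: h0.
Qed.

Lemma greedy_color (E : finType) (rk : E -> nat) (cf : rel E) (X : {set E}) :
  injective rk -> (forall e f, cf e f -> cf f e) ->
  (forall e, e \in X -> #|[set f in X | cf e f && (rk e < rk f)%N]| <= 3)%N ->
  exists c : E -> 'I_4, forall e f, e \in X -> f \in X -> e != f -> cf e f -> c e != c f.
Proof.
move=> rkI cfS.
elim: {X}#|X| {-2}X (erefl #|X|) => [|n IH] X eX hX.
  exists (fun _ => ord0) => e f He; move: eX; by rewrite (cardsD1 e) He.
have [e0 He0] : exists e0, e0 \in X by apply/set0Pn; rewrite -card_gt0 eX.
case: (@arg_minnP _ e0 (fun x => x \in X) rk He0) => e /= He emin.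
have eX' : #|X :\ e| = n by move: eX; rewrite (cardsD1 e) He add1n => [[]].
have [c' Hc'] : exists c' : E -> 'I_4, forall x y, x \in X :\ e -> y \in X :\ e ->
    x != y -> cf x y -> c' x != c' y.
  apply: IH => // x Hx; apply: leq_trans (hX x _); last by case/setD1P: Hx.
  apply: subset_leq_card; apply/subsetP => f; rewrite !inE.
  by case/andP => /andP[_ ->] ->.
set F := c' @: [set f in X | cf e f && (rk e < rk f)%N].
have cF : (#|F| <= 3)%N by apply: leq_trans (leq_imset_card _ _) (hX e He).
have [col Hcol] : exists col, col \notin F.
  case: (pickP [pred x | x \notin F]) => [col Hc0|none]; first by exists col.
  have : #|~: F| = 0%N by apply/eqP; rewrite cards_eq0; apply/eqP/setP => x; rewrite !inE; move: (none x) => /=.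
  move=> h; move: (cardsCs F); rewrite h card_ord subn0 => hF; by move: cF; rewrite hF.
have key : forall y, y \in X -> y != e -> cf e y -> col != c' y.
  move=> y yX ye cfy; apply/negP => /eqP cy; move: Hcol; rewrite cy.
  apply/negP/negPn/imsetP; exists y => //; rewrite inE yX cfy /= ltn_neqAle emin // andbT.
  by apply/negP => /eqP /rkI ey; rewrite ey eqxx in ye.
exists (fun x => if x == e then col else c' x) => x y xX yX xy cxy.
case: (eqVneq x e) => [xe|xe]; case: (eqVneq y e) => [ye|ye].
- by rewrite xe ye eqxx in xy.
- by subst x; apply: key.
- by subst y; rewrite eq_sym; apply: key => //; apply: cfS.
- by apply: Hc' => //; apply/setD1P.
Qed.

Definition Ab (V E : finType) (src dst : E -> V) (M : {set E}) (rk : E -> nat)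
  (v : V) (e : E) : {set E} := [set f in deltaM src dst M v | (rk e < rk f)%N].

Definition Tv (V E : finType) (src dst : E -> V) (M : {set E}) (rk : E -> nat)
  (v : V) : {set E} := [set e in deltaM src dst M v | (#|Ab src dst M rk v e| <= 1)%N].

Lemma T_le2 (V E : finType) (src dst : E -> V) (M : {set E}) (rk : E -> nat) v :
  injective rk -> (#|Tv src dst M rk v| <= 2)%N.
Proof.
move=> rkI; rewrite leqNgt; apply/negP => h3.
have [e0 He0] : exists e0, e0 \in Tv src dst M rk v.
  by apply/set0Pn; rewrite -card_gt0 (ltn_trans _ h3).
case: (@arg_minnP _ e0 (fun x => x \in Tv src dst M rk v) rk He0) => a /= Ha amin.
have: (#|Tv src dst M rk v :\ a| <= #|Ab src dst M rk v a|)%N.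
  apply: subset_leq_card; apply/subsetP => f /setD1P [fa fT].
  move: (fT); rewrite inE => /andP[fD _]; rewrite inE fD /=.
  rewrite ltn_neqAle amin // andbT; apply/negP => /eqP /rkI af.
  by rewrite af eqxx in fa.
move=> hsub; move: (Ha); rewrite inE => /andP[_ h1].
move: h3; rewrite (cardsD1 a) Ha => h3; move: hsub h1 h3; lia.
Qed.

Lemma T_ge (V E : finType) (src dst : E -> V) (M : {set E}) (rk : E -> nat) v :
  injective rk -> (minn 2 #|deltaM src dst M v| <= #|Tv src dst M rk v|)%N.
Proof.
move=> rkI.
case: (set_0Vmem (deltaM src dst M v)) => [->|[e0 He0]]; first by rewrite cards0.
case: (@arg_maxnP _ e0 (fun x => x \in deltaM src dst M v) rk He0) => m /= Hm mmax.
have mT : m \in Tv src dst M rk v.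
  rewrite inE Hm /=; apply: leq_trans (_ : #|(set0 : {set E})| <= 1)%N; last by rewrite cards0.
  apply: subset_leq_card; apply/subsetP => f; rewrite inE => /andP[fD lt].
  by move: (mmax f fD); rewrite leqNgt lt.
case: (set_0Vmem (deltaM src dst M v :\ m)) => [e1|[f0 Hf0]].
  rewrite (cardsD1 m) Hm e1 cards0 /=.
  by rewrite card_gt0; apply/set0Pn; exists m.
case: (@arg_maxnP _ f0 (fun x => x \in deltaM src dst M v :\ m) rk Hf0) => m2 /= /setD1P [m2m Hm2] m2max.
have m2T : m2 \in Tv src dst M rk v.
  rewrite inE Hm2 /=; apply: leq_trans (_ : #|[set m]| <= 1)%N; last by rewrite cards1.
  apply: subset_leq_card; apply/subsetP => f /setIdP [fD lt].
  rewrite inE; apply/negP => fm.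
  have : f \in deltaM src dst M v :\ m by apply/setD1P; split => //; apply/negP.
  by move/m2max; rewrite leqNgt lt.
apply: leq_trans (geq_minl _ _) _.
apply: leq_trans (_ : #|[set m; m2]| <= _)%N.
  by rewrite cards2 eq_sym m2m.
by apply: subset_leq_card; apply/subsetP => x /set2P [->|->].
Qed.

Lemma B_lt_T (V E : finType) (src dst : E -> V) (M : {set E}) (rk : E -> nat) v a c :
  injective rk -> a \in deltaM src dst M v :\: Tv src dst M rk v ->
  c \in Tv src dst M rk v -> (rk a < rk c)%N.
Proof.
move=> rkI /setDP [aD aT] cT.
have a2 : ~~ (#|Ab src dst M rk v a| <= 1)%N by move: aT; rewrite inE aD.
move: (cT); rewrite inE => /andP[cD c1].
rewrite ltnNge leq_eqVlt; apply/negP => /orP [/eqP /rkI ca|lt].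
  by rewrite -ca cT in aT.
move/negP: a2; apply; apply: leq_trans c1.
apply: subset_leq_card; apply/subsetP => f; rewrite !inE => /andP[-> h].
by rewrite (ltn_trans lt h).
Qed.

Lemma in_delta (V E : finType) (src dst : E -> V) v e :
  e \in delta src dst v -> v = src e \/ v = dst e.
Proof. by rewrite inE => /orP [/eqP->|/eqP->]; [left|right]. Qed.

Lemma feasible (R : realFieldType) (V E : finType) (src dst : E -> V) (M S : {set E})
  (rk : E -> nat) (b : V -> R) (d : V -> E -> R) v :
  S \subset M ->
  (forall e f, e \in S -> f \in S -> e \in deltaM src dst M v -> f \in deltaM src dst M v ->
     e \in Tv src dst M rk v -> e = f) ->
  (forall e, e \in delta src dst v -> d v e <= b v) ->
  (forall e, e \in delta src dst v -> 0 <= d v e) ->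
  \sum_(e in deltaM src dst M v :\: Tv src dst M rk v) d v e <= b v ->
  \sum_(e in deltaM src dst S v) d v e <= b v.
Proof.
move=> SM hS hdb hd0 hB.
have inD : forall e, e \in deltaM src dst S v -> e \in deltaM src dst M v.
  by move=> e /setIP [ed eS]; apply/setIP; split => //; apply: (subsetP SM).
case: (boolP [exists e, (e \in deltaM src dst S v) && (e \in Tv src dst M rk v)]).
  case/existsP => e /andP [eS eT].
  have -> : deltaM src dst S v = [set e].
    apply/setP => f; rewrite in_set1; apply/idP/eqP => [fS|->//].
    symmetry; apply: hS => //; [by case/setIP: eS|by case/setIP: fS|exact: inD|exact: inD].
  by rewrite big_set1; apply: hdb; case/setIP: eS.
move=> none.
have sub : deltaM src dst S v \subset deltaM src dst M v :\: Tv src dst M rk v.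
  apply/subsetP => f fS; apply/setDP; split; first exact: inD.
  by apply/negP => fT; move/existsP: none; apply; exists f; rewrite fS fT.
apply: le_trans hB.
rewrite [X in _ <= X](big_setID (deltaM src dst S v)) (setIidPr sub) /= lerDl.
apply: sumr_ge0 => i /setDP [/setDP [/setIP [iD _] _] _]; exact: hd0.
Qed.

Theorem lemma7 (R : realFieldType) (V E : finType) (src dst : E -> V)
  (b : V -> R) (d : V -> E -> R) (p : E -> R) (M' : {set E}) :
  (forall e, src e != dst e) ->
  (forall v, 0 <= b v) ->
  (forall v e, e \in delta src dst v -> 0 <= d v e) ->
  (forall e, 0 <= p e) ->
  (exists rk : E -> nat, consistent_ordering src dst d rk) ->
  (forall v e, e \in delta src dst v -> d v e <= b v) ->
  (forall v, exists L : {set E},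
      top2 (d v) (deltaM src dst M' v) L /\
      \sum_(e in deltaM src dst M' v :\: L) d v e <= b v) ->
  exists M : {set E}, M \subset M' /\
    (forall v, \sum_(e in deltaM src dst M v) d v e <= b v) /\
    profit p M' / 5%:R <= profit p M.
Proof.
move=> hsd hb hd0 hp [rk [rkI rkd]] hdb hL.
have sumB : forall v, \sum_(e in deltaM src dst M' v :\: Tv src dst M' rk v) d v e <= b v.
  move=> v; have [L [[LD [cL _]] hLs]] := hL v.
  set DD := deltaM src dst M' v; set T := Tv src dst M' rk v.
  have TD : T \subset DD by apply/subsetP=> x; rewrite inE => /andP[].
  rewrite (big_setID L) /=.
  apply: le_trans hLs.
  rewrite [X in _ <= X](big_setID T) /= !setDDl [T :|: L]setUC.
  apply: lerD => //.
  apply: sum_le_sets.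
  - apply: (@leq_trans #|L :\: T|).
      by apply: subset_leq_card; apply/subsetP => x /setIP [/setDP [_ xT] xL]; apply/setDP.
    apply: (@leq_trans #|T :\: L|); last first.
      apply: subset_leq_card; apply/subsetP => x /setDP [xT xL]; apply/setIP; split => //.
      by apply/setDP; split => //; apply: (subsetP TD).
    have h1 := cardsID T L; have h2 := cardsID L T; rewrite setIC in h2.
    have h3 := T_ge src dst M' v rkI; rewrite -/DD -/T -cL in h3.
    move: h1 h2 h3; lia.
  - move=> a c /setIP [aB _] /setIP [/setDP [cD _] cT].
    apply: rkd; [by case/setDP: aB => /setIP[]|by case/setIP: cD|].
    exact: (B_lt_T rkI aB cT).
  - by move=> c /setIP [/setDP [/setIP [cd _] _] _]; apply: hd0.
set T := Tv src dst M' rk.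
set DD := deltaM src dst M'.
pose cf := [rel e f | [exists v, [&& e \in DD v, f \in DD v & (e \in T v) || (f \in T v)]]].
pose Rem := [set e in M' | (e \in T (src e)) || (e \in T (dst e))].
have cfS : forall e f, cf e f -> cf f e.
  move=> e f /existsP [v /and3P [eD fD o]]; apply/existsP; exists v.
  by rewrite eD fD orbC o.
have bound : forall e, e \in Rem -> (#|[set f in Rem | cf e f && (rk e < rk f)%N]| <= 3)%N.
  move=> e eR.
  pose Cs v := if e \in T v then Ab src dst M' rk v e else T v.
  have inCs : forall v f, e \in DD v -> f \in DD v -> (e \in T v) || (f \in T v) ->
      (rk e < rk f)%N -> f \in Cs v.
    move=> v f eD fD o lt; rewrite /Cs; case: ifP => eT.
      by rewrite inE fD lt.
    by rewrite eT in o.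
  have CsA : forall v, e \in T v -> (#|Cs v| <= 1)%N.
    by move=> v eT; rewrite /Cs eT; move: eT; rewrite inE => /andP[].
  have Cs2 : forall v, (#|Cs v| <= 2)%N.
    move=> v; rewrite /Cs; case: ifP => eT; last exact: T_le2.
    by move: eT; rewrite inE => /andP[_ h]; apply: leq_trans h _.
  apply: (@leq_trans #|Cs (src e) :|: Cs (dst e)|).
    apply: subset_leq_card; apply/subsetP => f; rewrite inE => /andP [_ /andP [/existsP [v /and3P [eD fD o]] lt]].
    have [vs|vs] : v = src e \/ v = dst e by apply: in_delta; case/setIP: eD.
      by subst v; rewrite inE (inCs _ _ eD fD o lt).
    by subst v; rewrite inE (inCs _ _ eD fD o lt) orbT.
  apply: leq_trans (leq_card_setU _ _).1 _.
  move: eR; rewrite inE => /andP [_ /orP [eT|eT]].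
    by have := CsA _ eT; have := Cs2 (dst e); lia.
  by have := CsA _ eT; have := Cs2 (src e); lia.
have [c Hc] := greedy_color rkI cfS bound.
pose S i := [set e in Rem | c e == i].
have RemM : Rem \subset M' by apply/subsetP => x; rewrite inE => /andP[].
have feasS : forall i v, \sum_(e in deltaM src dst (S i) v) d v e <= b v.
  move=> i v; apply: (feasible (M := M') (rk := rk)) => //.
  - by apply/subsetP => x; rewrite inE => /andP [xR _]; apply: (subsetP RemM).
  - move=> e f /setIdP [eR ei] /setIdP [fR fi] eD fD eT.
    apply/eqP; apply/negPn/negP => ef.
    have hcf : cf e f by apply/existsP; exists v; rewrite eD fD eT.
    by move: (Hc e f eR fR ef hcf); rewrite (eqP ei) (eqP fi) eqxx.
  - exact: hdb.
  - exact: hd0.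
have feas0 : forall v, \sum_(e in deltaM src dst (M' :\: Rem) v) d v e <= b v.
  move=> v; apply: (feasible (M := M') (rk := rk)) => //.
  - exact: subsetDl.
  - move=> e f /setDP [eM eR] _ eD _ eT; exfalso; move/negP: eR; apply.
    rewrite inE eM /=.
    by have [vs|vd] := in_delta (elimT setIP eD).1; [rewrite -vs eT|rewrite -vd eT orbT].
  - exact: hdb.
  - exact: hd0.
have split : profit p M' = profit p (M' :\: Rem) + \sum_(i < 4) profit p (S i).
  rewrite /profit (big_setID Rem) /= (setIidPr RemM) addrC; congr (_ + _).
  rewrite (partition_big c xpredT) //=; apply: eq_bigr => i _.
  by apply: eq_bigl => x /=; rewrite /S [in RHS]inE.
case: (lerP (profit p M' / 5%:R) (profit p (M' :\: Rem))) => h0.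
  by exists (M' :\: Rem); split; [exact: subsetDl|split].
have [i hi] : exists i, profit p M' / 5%:R <= profit p (S i).
  move: split h0; rewrite !big_ord_recr big_ord0 /= add0r.
  set P := profit p M'.
  case: (lerP (P / 5%:R) (profit p (S ord_max))) => h3; first by exists ord_max.
  case: (lerP (P / 5%:R) (profit p (S (widen_ord (leqnSn 3) ord_max)))) => h2; first by eexists; exact: h2.
  case: (lerP (P / 5%:R) (profit p (S (widen_ord (leqnSn 3) (widen_ord (leqnSn 2) ord_max))))) => h1; first by eexists; exact: h1.
  case: (lerP (P / 5%:R) (profit p (S (widen_ord (leqnSn 3) (widen_ord (leqnSn 2) (widen_ord (leqnSn 1) ord_max)))))) => h4; first by eexists; exact: h4.
  move=> e h0'; exfalso; move: h1 h2 h3 h4 h0'; rewrite e. lra.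
exists (S i); split; last by split.
by apply/subsetP => x; rewrite inE => /andP [xR _]; apply: (subsetP RemM).
Qed.
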